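(* Let $\mathcal{P}\subset\mathbb{R}^3$ be a pointsymmetric convex polyhedron with radius $1$ and let $S\in\mathcal{P}$. Let $\bar\theta_1,\bar\varphi_1,\bar\theta_2,\bar\varphi_2,\bar\alpha\in\mathbb{R}$, $\varepsilon>0$, and let $w\in\mathbb{R}^2$ be a unit vector. Write $\overline{M_1}=M(\bar\theta_1,\bar\varphi_1)$, $\overline{M_2}=M(\bar\theta_2,\bar\varphi_2)$, $\overline{M_k}^\theta=M^\theta(\bar\theta_k,\bar\varphi_k)$, $\overline{M_k}^\varphi=M^\varphi(\bar\theta_k,\bar\varphi_k)$ for $k=1,2$, and set \[ G=\langle R(\bar\alpha)\overline{M_1}S,w\rangle-\varepsilon\big(|\langle R'(\bar\alpha)\overline{M_1}S,w\rangle|+|\langle R(\bar\alpha)\overline{M_1}^\theta S,w\rangle|+|\langle R(\bar\alpha)\overline{M_1}^\varphi S,w\rangle|\big)-\tfrac{9}{2}\varepsilon^2, \] \[ H_P=\langle \overline{M_2}P,w\rangle+\varepsilon\big(|\langle\overline{M_2}^\theta P,w\rangle|+|\langle\overline{M_2}^\varphi P,w\rangle|\big)+2\varepsilon^2\quad (P\in\mathcal{P}). \] If $G>\max_{P\in\mathcal{P}}H_P$, then there is no $(\theta_1,\varphi_1,\theta_2,\varphi_2,\alpha)$ with $|\theta_k-\bar\theta_k|,|\varphi_k-\bar\varphi_k|,|\alpha-\bar\alpha|\le\varepsilon$ ($k=1,2$) such that $R(\alpha)M(\theta_1,\varphi_1)\mathcal{P}\subset\operatorname{int}\operatorname{conv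}(M(\theta_2,\varphi_2)\mathcal{P})$.
   Context: $R(\alpha)=\begin{pmatrix}\cos\alpha&-\sin\alpha\\ \sin\alpha&\cos\alpha\end{pmatrix}$, $R'(\alpha)=\frac{d}{d\alpha}R(\alpha)$; $M(\theta,\varphi)=\begin{pmatrix}-\sin\theta&\cos\theta&0\\ -\cos\theta\cos\varphi&-\sin\theta\cos\varphi&\sin\varphi\end{pmatrix}$, $M^\theta=\partial_\theta M$, $M^\varphi=\partial_\varphi M$. A polyhedron is a finite non-degenerate set of points of $\mathbb{R}^3$ in convex position; pointsymmetric means $\mathcal{P}=-\mathcal{P}$; radius $1$ means $\|P\|\le1$ for all $P\in\mathcal{P}$ with equality for some $P$. Matrices act on point sets elementwise. *)

(* Defs.v *)
From Stdlib Require Import Reals Lra List.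
Import ListNotations.
Open Scope R_scope.

Definition pt3 : Type := (R * R * R)%type.
Definition pt2 : Type := (R * R)%type.

Definition px (P : pt3) : R := fst (fst P).
Definition py (P : pt3) : R := snd (fst P).
Definition pz (P : pt3) : R := snd P.

Definition opp3 (P : pt3) : pt3 := (- px P, - py P, - pz P).
Definition sub3 (P Q : pt3) : pt3 := (px P - px Q, py P - py Q, pz P - pz Q).
Definition norm3 (P : pt3) : R := sqrt (px P ^ 2 + py P ^ 2 + pz P ^ 2).
Definition det3 (A B C : pt3) : R :=
  px A * (py B * pz C - pz B * py C)
  - py A * (px B * pz C - pz B * px C)
  + pz A * (px B * py C - py B * px C).

Definition inner2 (u v : pt2) : R := fst u * fst v + snd u * snd v.
Definition norm2 (u : pt2) : R := sqrt (fst u ^ 2 + snd u ^ 2).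
Definition dist2 (u v : pt2) : R := norm2 (fst u - fst v, snd u - snd v).

Definition Rot (a : R) (v : pt2) : pt2 :=
  (cos a * fst v - sin a * snd v, sin a * fst v + cos a * snd v).
Definition Rot' (a : R) (v : pt2) : pt2 :=
  (- sin a * fst v - cos a * snd v, cos a * fst v - sin a * snd v).

Definition Mmat (t f : R) (P : pt3) : pt2 :=
  (- sin t * px P + cos t * py P + 0 * pz P,
   - cos t * cos f * px P - sin t * cos f * py P + sin f * pz P).
Definition Mtheta (t f : R) (P : pt3) : pt2 :=
  (- cos t * px P - sin t * py P + 0 * pz P,
   sin t * cos f * px P - cos t * cos f * py P + 0 * pz P).
Definition Mphi (t f : R) (P : pt3) : pt2 :=
  (0 * px P + 0 * py P + 0 * pz P,
   cos t * sin f * px P + sin t * sin f * py P + cos f * pz P).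

Fixpoint wsum3 (w : list R) (L : list pt3) : pt3 :=
  match w, L with
  | a :: w', P :: L' =>
      let S := wsum3 w' L' in
      (a * px P + px S, a * py P + py S, a * pz P + pz S)
  | _, _ => (0, 0, 0)
  end.
Fixpoint wsum2 (w : list R) (L : list pt2) : pt2 :=
  match w, L with
  | a :: w', P :: L' =>
      let S := wsum2 w' L' in (a * fst P + fst S, a * snd P + snd S)
  | _, _ => (0, 0)
  end.

Definition in_conv3 (L : list pt3) (x : pt3) : Prop :=
  exists w : list R, length w = length L /\ Forall (fun a => 0 <= a) w /\
    fold_right Rplus 0 w = 1 /\ x = wsum3 w L.
Definition in_conv2 (L : list pt2) (x : pt2) : Prop :=
  exists w : list R, length w = length L /\ Forall (fun a => 0 <= a) w /\
    fold_right Rplus 0 w = 1 /\ x = wsum2 w L.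

Definition in_int_conv2 (L : list pt2) (x : pt2) : Prop :=
  exists r, 0 < r /\ forall y, dist2 x y < r -> in_conv2 L y.

(* a polyhedron: a finite (duplicate-free list), non-degenerate (not contained
   in a plane) set of points in convex position (no point in the convex hull
   of the others) *)
Definition polyhedron (L : list pt3) : Prop :=
  NoDup L /\
  (exists P0 P1 P2 P3, In P0 L /\ In P1 L /\ In P2 L /\ In P3 L /\
     det3 (sub3 P1 P0) (sub3 P2 P0) (sub3 P3 P0) <> 0) /\
  (forall i, (i < length L)%nat ->
     ~ in_conv3 (firstn i L ++ skipn (S i) L) (nth i L (0, 0, 0))).

Definition pointsymmetric (L : list pt3) : Prop :=
  forall P, In P L <-> In (opp3 P) L.

Definition radius_one (L : list pt3) : Prop :=
  (forall P, In P L -> norm3 P <= 1) /\ (exists P, In P L /\ norm3 P = 1).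

(* Main.v *)
From Stdlib Require Import Reals Lra Psatz.
From Coquelicot Require Import Coquelicot.
Open Scope R_scope.

Lemma sin_le_abs x : Rabs (sin x) <= Rabs x.
Proof.
  destruct (Req_dec x 0) as [->|Hx]. rewrite sin_0; lra.
  assert (H: forall a b, a < b -> Rabs (sin b - sin a) <= Rabs (b - a)).
  { intros a b Hab.
    destruct (MVT_cor2 sin cos a b Hab) as [c [Hc _]].
    { intros; apply derivable_pt_lim_sin. }
    rewrite Hc, Rabs_mult. pose proof (COS_bound c).
    assert (Rabs (cos c) <= 1) by (apply Rabs_le; lra).
    pose proof (Rabs_pos (b - a)). nra. }
  destruct (Rlt_or_le 0 x).
  - specialize (H 0 x H0). rewrite sin_0 in H. now rewrite !Rminus_0_r in H.
  - assert (x < 0) by lra. specialize (H x 0 H1). rewrite sin_0 in H.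
    rewrite Rminus_0_l, Rabs_Ropp, Rminus_0_l, Rabs_Ropp in H. exact H.
Qed.

Lemma cos_lb2 x : 1 - x^2/2 <= cos x.
Proof.
  assert (Hc : cos x = cos (2*(x/2))) by (f_equal; field).
  rewrite Hc, cos_2a_sin. pose proof (sin_le_abs (x/2)).
  assert (sin (x/2) ^2 <= (x/2)^2).
  { rewrite <- (pow2_abs (sin _)), <- (pow2_abs (x/2)).
    pose proof (Rabs_pos (sin (x/2))). nra. }
  nra.
Qed.

Lemma kfun h : (1 - cos h)^2 + (h - sin h)^2 <= h^4/4.
Proof.
  assert (E: forall h, (1 - cos h)^2 + (h - sin h)^2 = 2 - 2 * cos h + h^2 - 2*h*sin h).
  { intro y. pose proof (sin2_cos2 y). unfold Rsqr in H. nra. }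
  set (k := fun h => h^4/4 - (2 - 2 * cos h + h^2 - 2*h*sin h)).
  assert (Hk0 : forall h, 0 <= h -> 0 <= k h).
  { intros y Hy. destruct (Req_dec y 0) as [->|Hy0].
    - unfold k. rewrite cos_0, sin_0. lra.
    - destruct (MVT_cor2 k (fun c => c * (c^2 - 2 + 2 * cos c)) 0 y) as [c [Hc Hc']].
      + lra.
      + intros c _. apply is_derive_Reals. unfold k. auto_derive. auto. field.
      + assert (k 0 = 0) by (unfold k; rewrite cos_0, sin_0; lra).
        pose proof (cos_lb2 c).
        assert (0 <= c^2 - 2 + 2 * cos c) by lra.
        assert (0 <= c * (c^2 - 2 + 2 * cos c)) by (apply Rmult_le_pos; lra).
        assert (0 <= c * (c^2 - 2 + 2 * cos c) * (y - 0)) by (apply Rmult_le_pos; lra).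
        lra. }
  rewrite E. destruct (Rle_or_lt 0 h).
  - specialize (Hk0 h H). unfold k in Hk0. lra.
  - specialize (Hk0 (-h) ltac:(lra)). unfold k in Hk0.
    rewrite cos_neg, sin_neg in Hk0. lra.
Qed.

Lemma tay2 A B C s t : A^2 + B^2 <= 1 ->
  Rabs ((C + A * cos t + B * sin t) - (C + A * cos s + B * sin s)
        - (t - s) * (B * cos s - A * sin s)) <= (t - s)^2/2.
Proof.
  intro HAB.
  set (h := t - s). replace t with (s + h) by (unfold h; ring).
  rewrite cos_plus, sin_plus.
  replace (C + A * (cos s * cos h - sin s * sin h) + B * (sin s * cos h + cos s * sin h) -
     (C + A * cos s + B * sin s) - h * (B * cos s - A * sin s))
    with ((A * cos s + B * sin s) * (cos h - 1) + (B * cos s - A * sin s) * (sin h - h)) by ring.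
  set (P := A * cos s + B * sin s). set (Q := B * cos s - A * sin s).
  assert (HPQ : P^2 + Q^2 <= 1).
  { unfold P, Q. pose proof (sin2_cos2 s). unfold Rsqr in H. nra. }
  assert (Hk : (cos h - 1)^2 + (sin h - h)^2 <= h^4/4).
  { pose proof (kfun h). replace ((cos h - 1)^2 + (sin h - h)^2) with ((1 - cos h)^2 + (h - sin h)^2) by ring. lra. }
  set (a := cos h - 1) in *. set (b := sin h - h) in *. clearbody P Q a b.
  assert (Hsq : (P*a + Q*b)^2 <= (h^2/2)^2).
  { assert ((P*a+Q*b)^2 <= (P^2+Q^2)*(a^2+b^2)).
    { assert (E2: (P^2+Q^2)*(a^2+b^2) - (P*a+Q*b)^2 = (P*b-Q*a)^2) by ring.
      pose proof (pow2_ge_0 (P*b-Q*a)). lra. }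
    assert (0 <= P^2+Q^2) by nra. assert (0 <= a^2+b^2) by nra.
    assert ((P^2+Q^2)*(a^2+b^2) <= 1 * (h^4/4)) by (apply Rmult_le_compat; lra).
    replace ((h^2/2)^2) with (h^4/4) by field. lra. }
  rewrite <- (pow2_abs (P*a+Q*b)) in Hsq.
  pose proof (Rabs_pos (P*a+Q*b)). assert (0 <= h^2/2) by nra.
  generalize dependent (Rabs (P*a+Q*b)). intros z Hz Hz0. nra.
Qed.

Lemma lip1 A B C s t : A^2 + B^2 <= 1 ->
  Rabs ((C + A * cos t + B * sin t) - (C + A * cos s + B * sin s)) <= Rabs (t - s).
Proof.
  intro HAB.
  set (h := t - s). replace t with (s + h) by (unfold h; ring).
  rewrite cos_plus, sin_plus.
  replace (C + A * (cos s * cos h - sin s * sin h) + B * (sin s * cos h + cos s * sin h) -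
     (C + A * cos s + B * sin s))
    with ((A * cos s + B * sin s) * (cos h - 1) + (B * cos s - A * sin s) * sin h) by ring.
  set (P := A * cos s + B * sin s). set (Q := B * cos s - A * sin s).
  assert (HPQ : P^2 + Q^2 <= 1).
  { unfold P, Q. pose proof (sin2_cos2 s). unfold Rsqr in H. nra. }
  assert (Hab : (cos h - 1)^2 + sin h ^2 <= h^2).
  { pose proof (cos_lb2 h). pose proof (sin2_cos2 h). unfold Rsqr in H0. nra. }
  set (a := cos h - 1) in *. set (b := sin h) in *. clearbody P Q a b.
  assert (Hsq : (P*a + Q*b)^2 <= (Rabs h)^2).
  { assert ((P*a+Q*b)^2 <= (P^2+Q^2)*(a^2+b^2)).
    { assert (E2: (P^2+Q^2)*(a^2+b^2) - (P*a+Q*b)^2 = (P*b-Q*a)^2) by ring.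
      pose proof (pow2_ge_0 (P*b-Q*a)). lra. }
    rewrite pow2_abs. nra. }
  rewrite <- (pow2_abs (P*a+Q*b)) in Hsq.
  pose proof (Rabs_pos (P*a+Q*b)). pose proof (Rabs_pos h).
  generalize dependent (Rabs (P*a+Q*b)). generalize dependent (Rabs h). intros. nra.
Qed.
Require Import Defs.
From Stdlib Require Import List.

Definition Fg u v t f (S : pt3) := u*(-sin t*px S + cos t*py S + 0*pz S) + v*(-cos t*cos f*px S - sin t*cos f*py S + sin f*pz S).
Definition Fgt u v t f (S : pt3) := u*(-cos t*px S - sin t*py S + 0*pz S) + v*(sin t*cos f*px S - cos t*cos f*py S + 0*pz S).
Definition Fgf u v t f (S : pt3) := u*(0*px S + 0*py S + 0*pz S) + v*(cos t*sin f*px S + sin t*sin f*py S + cos f*pz S).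

Lemma trig1 x : sin x ^2 + cos x ^2 = 1.
Proof. pose proof (sin2_cos2 x). unfold Rsqr in H. lra. Qed.

Lemma T_t u v t t' f S : u^2+v^2 <= 1 -> px S^2 + py S^2 + pz S^2 <= 1 ->
  Rabs (Fg u v t' f S - Fg u v t f S - (t' - t) * Fgt u v t f S) <= (t'-t)^2/2.
Proof.
  intros Huv HS.
  pose proof (tay2 (u * py S - v * cos f * px S) (- u * px S - v * cos f * py S) (v * sin f * pz S) t t').
  replace (Fg u v t' f S - Fg u v t f S - (t' - t) * Fgt u v t f S) with
   (v * sin f * pz S + (u * py S - v * cos f * px S) * cos t' + (- u * px S - v * cos f * py S) * sin t' -
      (v * sin f * pz S + (u * py S - v * cos f * px S) * cos t + (- u * px S - v * cos f * py S) * sin t) -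
      (t' - t) * ((- u * px S - v * cos f * py S) * cos t - (u * py S - v * cos f * px S) * sin t))
   by (unfold Fg, Fgt; ring).
  apply H.
  replace ((u * py S - v * cos f * px S) ^ 2 + (- u * px S - v * cos f * py S) ^ 2)
    with ((u^2 + v^2 * cos f ^2) * (px S ^2 + py S^2)) by ring.
  pose proof (trig1 f). pose proof (pow2_ge_0 (sin f)). pose proof (pow2_ge_0 (pz S)).
  pose proof (pow2_ge_0 v). pose proof (pow2_ge_0 u).
  assert (0 <= u^2 + v^2 * cos f ^2 <= 1) by nra.
  assert (0 <= px S ^2 + py S^2 <= 1) by nra. nra.
Qed.

Lemma L_t u v t t' f S : u^2+v^2 <= 1 -> px S^2 + py S^2 + pz S^2 <= 1 ->
  Rabs (Fg u v t' f S - Fg u v t f S) <= Rabs (t' - t).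
Proof.
  intros Huv HS.
  pose proof (lip1 (u * py S - v * cos f * px S) (- u * px S - v * cos f * py S) (v * sin f * pz S) t t').
  replace (Fg u v t' f S - Fg u v t f S) with
   (v * sin f * pz S + (u * py S - v * cos f * px S) * cos t' + (- u * px S - v * cos f * py S) * sin t' -
      (v * sin f * pz S + (u * py S - v * cos f * px S) * cos t + (- u * px S - v * cos f * py S) * sin t))
   by (unfold Fg; ring).
  apply H.
  replace ((u * py S - v * cos f * px S) ^ 2 + (- u * px S - v * cos f * py S) ^ 2)
    with ((u^2 + v^2 * cos f ^2) * (px S ^2 + py S^2)) by ring.
  pose proof (trig1 f). pose proof (pow2_ge_0 (sin f)). pose proof (pow2_ge_0 (pz S)).
  pose proof (pow2_ge_0 v). pose proof (pow2_ge_0 u).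
  assert (0 <= u^2 + v^2 * cos f ^2 <= 1) by nra.
  assert (0 <= px S ^2 + py S^2 <= 1) by nra. nra.
Qed.

Lemma rot_bound t (S : pt3) : px S^2 + py S^2 + pz S^2 <= 1 ->
  (- cos t * px S - sin t * py S)^2 + pz S ^2 <= 1.
Proof.
  intros HS. pose proof (trig1 t).
  assert (E: (- cos t * px S - sin t * py S)^2 + (sin t * px S - cos t * py S)^2
             = (sin t ^2 + cos t^2) * (px S^2 + py S^2)) by ring.
  rewrite H in E. pose proof (pow2_ge_0 (sin t * px S - cos t * py S)). nra.
Qed.

Lemma T_f u v t f f' S : u^2+v^2 <= 1 -> px S^2 + py S^2 + pz S^2 <= 1 ->
  Rabs (Fg u v t f' S - Fg u v t f S - (f' - f) * Fgf u v t f S) <= (f'-f)^2/2.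
Proof.
  intros Huv HS.
  pose proof (tay2 (v * (- cos t * px S - sin t * py S)) (v * pz S) (u*(-sin t*px S + cos t*py S + 0*pz S)) f f').
  replace (Fg u v t f' S - Fg u v t f S - (f' - f) * Fgf u v t f S) with
   ((u*(-sin t*px S + cos t*py S + 0*pz S)) + (v * (- cos t * px S - sin t * py S)) * cos f' + (v * pz S) * sin f' -
      ((u*(-sin t*px S + cos t*py S + 0*pz S)) + (v * (- cos t * px S - sin t * py S)) * cos f + (v * pz S) * sin f) -
      (f' - f) * ((v * pz S) * cos f - (v * (- cos t * px S - sin t * py S)) * sin f))
   by (unfold Fg, Fgf; ring).
  apply H.
  replace ((v * (- cos t * px S - sin t * py S)) ^ 2 + (v * pz S) ^ 2)
    with (v^2 * ((- cos t * px S - sin t * py S)^2 + pz S ^2)) by ring.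
  pose proof (rot_bound t S HS). pose proof (pow2_ge_0 u). pose proof (pow2_ge_0 v).
  pose proof (pow2_ge_0 (- cos t * px S - sin t * py S)). pose proof (pow2_ge_0 (pz S)).
  nra.
Qed.

Lemma L_f u v t f f' S : u^2+v^2 <= 1 -> px S^2 + py S^2 + pz S^2 <= 1 ->
  Rabs (Fg u v t f' S - Fg u v t f S) <= Rabs (f' - f).
Proof.
  intros Huv HS.
  pose proof (lip1 (v * (- cos t * px S - sin t * py S)) (v * pz S) (u*(-sin t*px S + cos t*py S + 0*pz S)) f f').
  replace (Fg u v t f' S - Fg u v t f S) with
   ((u*(-sin t*px S + cos t*py S + 0*pz S)) + (v * (- cos t * px S - sin t * py S)) * cos f' + (v * pz S) * sin f' -
      ((u*(-sin t*px S + cos t*py S + 0*pz S)) + (v * (- cos t * px S - sin t * py S)) * cos f + (v * pz S) * sin f))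
   by (unfold Fg; ring).
  apply H.
  replace ((v * (- cos t * px S - sin t * py S)) ^ 2 + (v * pz S) ^ 2)
    with (v^2 * ((- cos t * px S - sin t * py S)^2 + pz S ^2)) by ring.
  pose proof (rot_bound t S HS). pose proof (pow2_ge_0 u). pose proof (pow2_ge_0 v).
  pose proof (pow2_ge_0 (- cos t * px S - sin t * py S)). pose proof (pow2_ge_0 (pz S)).
  nra.
Qed.

Lemma L_tf u v t t' f S : u^2+v^2 <= 1 -> px S^2 + py S^2 + pz S^2 <= 1 ->
  Rabs (Fgf u v t' f S - Fgf u v t f S) <= Rabs (t' - t).
Proof.
  intros Huv HS.
  pose proof (lip1 (v * sin f * px S) (v * sin f * py S) (v * cos f * pz S) t t').
  replace (Fgf u v t' f S - Fgf u v t f S) with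
   (v * cos f * pz S + v * sin f * px S * cos t' + v * sin f * py S * sin t' -
      (v * cos f * pz S + v * sin f * px S * cos t + v * sin f * py S * sin t))
   by (unfold Fgf; ring).
  apply H.
  replace ((v * sin f * px S) ^ 2 + (v * sin f * py S) ^ 2)
    with (v^2 * sin f ^2 * (px S ^2 + py S^2)) by ring.
  pose proof (trig1 f). pose proof (pow2_ge_0 (cos f)). pose proof (pow2_ge_0 (pz S)).
  pose proof (pow2_ge_0 v). pose proof (pow2_ge_0 u).
  assert (0 <= v^2 * sin f ^2 <= 1) by nra.
  assert (0 <= px S ^2 + py S^2 <= 1) by nra. nra.
Qed.

Lemma M_norm t f S : (- sin t * px S + cos t * py S + 0 * pz S)^2
   + (- cos t * cos f * px S - sin t * cos f * py S + sin f * pz S)^2 <= px S^2 + py S^2 + pz S^2.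
Proof.
  set (q := cos t * px S + sin t * py S).
  assert (E1 : (- cos t * cos f * px S - sin t * cos f * py S + sin f * pz S)^2
     + (sin f * q + cos f * pz S)^2 = (sin f^2 + cos f^2) * (q^2 + pz S^2)) by (unfold q; ring).
  assert (E2 : (- sin t * px S + cos t * py S + 0 * pz S)^2 + q^2
     = (sin t^2 + cos t^2) * (px S^2 + py S^2)) by (unfold q; ring).
  rewrite trig1 in E1, E2. pose proof (pow2_ge_0 (sin f * q + cos f * pz S)). lra.
Qed.

Lemma T_a a a' t f S (w : pt2) : fst w ^2 + snd w ^2 = 1 -> px S^2 + py S^2 + pz S^2 <= 1 ->
  Rabs (inner2 (Rot a' (Mmat t f S)) w - inner2 (Rot a (Mmat t f S)) w
        - (a' - a) * inner2 (Rot' a (Mmat t f S)) w) <= (a' - a)^2/2.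
Proof.
  intros Hw HS.
  set (m1 := - sin t * px S + cos t * py S + 0 * pz S).
  set (m2 := - cos t * cos f * px S - sin t * cos f * py S + sin f * pz S).
  pose proof (M_norm t f S) as HM. fold m1 m2 in HM.
  pose proof (tay2 (fst w * m1 + snd w * m2) (snd w * m1 - fst w * m2) 0 a a').
  replace (inner2 (Rot a' (Mmat t f S)) w - inner2 (Rot a (Mmat t f S)) w
        - (a' - a) * inner2 (Rot' a (Mmat t f S)) w) with
   (0 + (fst w * m1 + snd w * m2) * cos a' + (snd w * m1 - fst w * m2) * sin a' -
      (0 + (fst w * m1 + snd w * m2) * cos a + (snd w * m1 - fst w * m2) * sin a) -
      (a' - a) * ((snd w * m1 - fst w * m2) * cos a - (fst w * m1 + snd w * m2) * sin a))
   by (unfold inner2, Rot, Rot', Mmat, m1, m2; simpl; ring).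
  apply H.
  replace ((fst w * m1 + snd w * m2) ^ 2 + (snd w * m1 - fst w * m2) ^ 2)
    with ((fst w ^2 + snd w ^2) * (m1^2 + m2^2)) by ring.
  rewrite Hw. lra.
Qed.

Lemma prod_lb h d e K : Rabs h <= e -> Rabs d <= K -> - (e * K) <= h * d /\ h * d <= e * K.
Proof.
  intros Hh Hd.
  assert (Rabs (h * d) <= e * K).
  { rewrite Rabs_mult. apply Rmult_le_compat; auto using Rabs_pos. }
  apply Rabs_le_between' in H || idtac.
  revert H. unfold Rabs. destruct (Rcase_abs (h*d)); intros; lra.
Qed.

Lemma inner_Rot a x (w : pt2) :
  inner2 (Rot a x) w = (fst w * cos a + snd w * sin a) * fst x + (snd w * cos a - fst w * sin a) * snd x.
Proof. unfold inner2, Rot; simpl; ring. Qed.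

Lemma lower_bound (S : pt3) (w : pt2) t1 f1 a tb1 fb1 ab eps :
  fst w ^2 + snd w ^2 = 1 -> px S^2 + py S^2 + pz S^2 <= 1 ->
  Rabs (t1 - tb1) <= eps -> Rabs (f1 - fb1) <= eps -> Rabs (a - ab) <= eps ->
  inner2 (Rot ab (Mmat tb1 fb1 S)) w
           - eps * (Rabs (inner2 (Rot' ab (Mmat tb1 fb1 S)) w)
                    + Rabs (inner2 (Rot ab (Mtheta tb1 fb1 S)) w)
                    + Rabs (inner2 (Rot ab (Mphi tb1 fb1 S)) w))
           - 9 / 2 * eps ^ 2 <= inner2 (Rot a (Mmat t1 f1 S)) w.
Proof.
  intros Hw HS Ht Hf Ha.
  set (u := fst w * cos ab + snd w * sin ab).
  set (v := snd w * cos ab - fst w * sin ab).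
  assert (Huv : u^2 + v^2 <= 1).
  { replace (u^2+v^2) with ((fst w ^2 + snd w ^2) * (sin ab ^2 + cos ab ^2)) by (unfold u, v; ring).
    rewrite Hw, trig1. lra. }
  assert (Hvu : v^2 + (-u)^2 <= 1) by lra.
  assert (E1 : forall t f, inner2 (Rot ab (Mmat t f S)) w = Fg u v t f S)
    by (intros; rewrite inner_Rot; unfold Fg, Mmat, u, v; simpl; ring).
  assert (E2 : forall t f, inner2 (Rot' ab (Mmat t f S)) w = Fg v (-u) t f S)
    by (intros; unfold inner2, Rot', Fg, Mmat, u, v; simpl; ring).
  assert (E3 : inner2 (Rot ab (Mtheta tb1 fb1 S)) w = Fgt u v tb1 fb1 S)
    by (rewrite inner_Rot; unfold Fgt, Mtheta, u, v; simpl; ring).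
  assert (E4 : inner2 (Rot ab (Mphi tb1 fb1 S)) w = Fgf u v tb1 fb1 S)
    by (rewrite inner_Rot; unfold Fgf, Mphi, u, v; simpl; ring).
  pose proof (T_a ab a t1 f1 S w Hw HS) as R1.
  rewrite E1, E2 in R1. rewrite E1, E2, E3, E4.
  pose proof (T_f u v t1 fb1 f1 S Huv HS) as R2.
  pose proof (L_tf u v tb1 t1 fb1 S Huv HS) as D3.
  pose proof (T_t u v tb1 t1 fb1 S Huv HS) as R3.
  pose proof (L_f v (-u) t1 fb1 f1 S Hvu HS) as D4.
  pose proof (L_t v (-u) tb1 t1 fb1 S Hvu HS) as D5.
  set (X1 := Fg v (- u) tb1 fb1 S) in *.
  set (X2 := Fgt u v tb1 fb1 S) in *.
  set (X3 := Fgf u v tb1 fb1 S) in *.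
  assert (Hpa : -(eps * Rabs X1) <= (a - ab) * X1) by (apply (prod_lb _ _ eps (Rabs X1)); lra).
  assert (Hpt : -(eps * Rabs X2) <= (t1 - tb1) * X2) by (apply (prod_lb _ _ eps (Rabs X2)); lra).
  assert (Hpf : -(eps * Rabs X3) <= (f1 - fb1) * X3) by (apply (prod_lb _ _ eps (Rabs X3)); lra).
  assert (P4 : -(eps*eps) <= (a - ab) * (Fg v (-u) t1 f1 S - Fg v (-u) t1 fb1 S))
    by (apply (prod_lb _ _ eps eps); lra).
  assert (P5 : -(eps*eps) <= (a - ab) * (Fg v (-u) t1 fb1 S - X1))
    by (apply (prod_lb _ _ eps eps); lra).
  assert (P3 : -(eps*eps) <= (f1 - fb1) * (Fgf u v t1 fb1 S - X3))
    by (apply (prod_lb _ _ eps eps); lra).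
  assert (Q1 : (a - ab)^2/2 <= eps^2/2).
  { rewrite <- (pow2_abs (a - ab)). pose proof (Rabs_pos (a-ab)). nra. }
  assert (Q2 : (f1 - fb1)^2/2 <= eps^2/2).
  { rewrite <- (pow2_abs (f1 - fb1)). pose proof (Rabs_pos (f1-fb1)). nra. }
  assert (Q3 : (t1 - tb1)^2/2 <= eps^2/2).
  { rewrite <- (pow2_abs (t1 - tb1)). pose proof (Rabs_pos (t1-tb1)). nra. }
  apply Rabs_le_between' in R1. apply Rabs_le_between' in R2. apply Rabs_le_between' in R3.
  set (F1 := Fg v (-u) t1 f1 S) in *. set (F2 := Fg v (-u) t1 fb1 S) in *.
  set (F3 := Fgf u v t1 fb1 S) in *.
  assert (E5 : (a - ab) * F1 = (a - ab) * (F1 - F2) + (a - ab) * (F2 - X1) + (a - ab) * X1) by ring.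
  assert (E6 : (f1 - fb1) * F3 = (f1 - fb1) * (F3 - X3) + (f1 - fb1) * X3) by ring.
  lra.
Qed.

Lemma upper_bound (P : pt3) (w : pt2) t2 f2 tb2 fb2 eps :
  fst w ^2 + snd w ^2 = 1 -> px P^2 + py P^2 + pz P^2 <= 1 ->
  Rabs (t2 - tb2) <= eps -> Rabs (f2 - fb2) <= eps ->
  inner2 (Mmat t2 f2 P) w <=
           inner2 (Mmat tb2 fb2 P) w
           + eps * (Rabs (inner2 (Mtheta tb2 fb2 P) w)
                    + Rabs (inner2 (Mphi tb2 fb2 P) w))
           + 2 * eps ^ 2.
Proof.
  intros Hw HS Ht Hf.
  set (u := fst w). set (v := snd w).
  assert (Huv : u^2 + v^2 <= 1) by (unfold u, v; lra).
  assert (E1 : forall t f, inner2 (Mmat t f P) w = Fg u v t f P)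
    by (intros; unfold inner2, Fg, Mmat, u, v; simpl; ring).
  assert (E3 : inner2 (Mtheta tb2 fb2 P) w = Fgt u v tb2 fb2 P)
    by (unfold inner2, Fgt, Mtheta, u, v; simpl; ring).
  assert (E4 : inner2 (Mphi tb2 fb2 P) w = Fgf u v tb2 fb2 P)
    by (unfold inner2, Fgf, Mphi, u, v; simpl; ring).
  rewrite !E1, E3, E4.
  pose proof (T_f u v t2 fb2 f2 P Huv HS) as R2.
  pose proof (L_tf u v tb2 t2 fb2 P Huv HS) as D3.
  pose proof (T_t u v tb2 t2 fb2 P Huv HS) as R3.
  set (X2 := Fgt u v tb2 fb2 P) in *.
  set (X3 := Fgf u v tb2 fb2 P) in *.
  assert (Hpt : (t2 - tb2) * X2 <= eps * Rabs X2) by (apply (prod_lb _ _ eps (Rabs X2)); lra).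
  assert (Hpf : (f2 - fb2) * X3 <= eps * Rabs X3) by (apply (prod_lb _ _ eps (Rabs X3)); lra).
  assert (P3 : (f2 - fb2) * (Fgf u v t2 fb2 P - X3) <= eps*eps)
    by (apply (prod_lb _ _ eps eps); lra).
  assert (Q2 : (f2 - fb2)^2/2 <= eps^2/2).
  { rewrite <- (pow2_abs (f2 - fb2)). pose proof (Rabs_pos (f2-fb2)). nra. }
  assert (Q3 : (t2 - tb2)^2/2 <= eps^2/2).
  { rewrite <- (pow2_abs (t2 - tb2)). pose proof (Rabs_pos (t2-tb2)). nra. }
  apply Rabs_le_between' in R2. apply Rabs_le_between' in R3.
  set (F3 := Fgf u v t2 fb2 P) in *.
  assert (E6 : (f2 - fb2) * F3 = (f2 - fb2) * (F3 - X3) + (f2 - fb2) * X3) by ring.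
  lra.
Qed.

Lemma conv_lt (w : pt2) (G : R) : forall (Ls : list pt2) (ws : list R),
  length ws = length Ls -> Forall (fun a => 0 <= a) ws ->
  (forall p, In p Ls -> inner2 p w < G) ->
  inner2 (wsum2 ws Ls) w <= fold_right Rplus 0 ws * G /\
  (0 < fold_right Rplus 0 ws -> inner2 (wsum2 ws Ls) w < fold_right Rplus 0 ws * G).
Proof.
  induction Ls as [|p Ls IH]; intros ws Hl Hf Hp.
  - destruct ws; simpl in *; [|discriminate]. unfold inner2; simpl. lra.
  - destruct ws as [|a ws]; simpl in *; [discriminate|].
    injection Hl as Hl. inversion Hf; subst.
    destruct (IH ws Hl H2 (fun q Hq => Hp q (or_intror Hq))) as [I1 I2].
    assert (Hpp := Hp p (or_introl eq_refl)).
    replace (inner2 (a * fst p + fst (wsum2 ws Ls), a * snd p + snd (wsum2 ws Ls)) w)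
      with (a * inner2 p w + inner2 (wsum2 ws Ls) w) by (unfold inner2; simpl; ring).
    assert (a * inner2 p w <= a * G) by (apply Rmult_le_compat_l; lra).
    split; [nra|]. intro Hpos.
    destruct (Rle_lt_or_eq_dec 0 a H1).
    + assert (a * inner2 p w < a * G) by (apply Rmult_lt_compat_l; lra). nra.
    + subst a. assert (0 < fold_right Rplus 0 ws) by lra. specialize (I2 H0). nra.
Qed.

Theorem theorem4p1 :
  forall (L : list pt3), polyhedron L -> pointsymmetric L -> radius_one L ->
  forall (S : pt3), In S L ->
  forall (tb1 fb1 tb2 fb2 ab eps : R), 0 < eps ->
  forall (w : pt2), norm2 w = 1 ->
  let G := inner2 (Rot ab (Mmat tb1 fb1 S)) w
           - eps * (Rabs (inner2 (Rot' ab (Mmat tb1 fb1 S)) w)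
                    + Rabs (inner2 (Rot ab (Mtheta tb1 fb1 S)) w)
                    + Rabs (inner2 (Rot ab (Mphi tb1 fb1 S)) w))
           - 9 / 2 * eps ^ 2 in
  let H := fun P : pt3 =>
           inner2 (Mmat tb2 fb2 P) w
           + eps * (Rabs (inner2 (Mtheta tb2 fb2 P) w)
                    + Rabs (inner2 (Mphi tb2 fb2 P) w))
           + 2 * eps ^ 2 in
  (forall P, In P L -> G > H P) ->
  ~ (exists t1 f1 t2 f2 a : R,
       Rabs (t1 - tb1) <= eps /\ Rabs (f1 - fb1) <= eps /\
       Rabs (t2 - tb2) <= eps /\ Rabs (f2 - fb2) <= eps /\
       Rabs (a - ab) <= eps /\
       forall P, In P L ->
         in_int_conv2 (map (Mmat t2 f2) L) (Rot a (Mmat t1 f1 P))).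
Proof.
  intros L _ _ [Hrad _] S HS tb1 fb1 tb2 fb2 ab eps Heps w Hw G H HGH
    [t1 [f1 [t2 [f2 [a [Ht1 [Hf1 [Ht2 [Hf2 [Ha Hin]]]]]]]]]].
  assert (Hw' : fst w ^2 + snd w ^2 = 1).
  { unfold norm2 in Hw. assert (0 <= fst w ^2 + snd w ^2) by nra.
    pose proof (sqrt_sqrt _ H0). rewrite Hw in H1. lra. }
  assert (Hn : forall P, In P L -> px P^2 + py P^2 + pz P^2 <= 1).
  { intros P HP. pose proof (Hrad P HP) as Hr. unfold norm3 in Hr.
    assert (0 <= px P^2 + py P^2 + pz P^2) by nra.
    pose proof (sqrt_sqrt _ H0). pose proof (sqrt_pos (px P^2 + py P^2 + pz P^2)). nra. }
  destruct (Hin S HS) as [r [Hr Hy]].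
  set (x := Rot a (Mmat t1 f1 S)) in *.
  assert (Hd : dist2 x x = 0).
  { unfold dist2, norm2; simpl. rewrite <- sqrt_0. f_equal. ring. }
  destruct (Hy x ltac:(lra)) as [ws [Hl [Hf [Hs Hx]]]].
  assert (Hlt : forall p, In p (map (Mmat t2 f2) L) -> inner2 p w < G).
  { intros p Hp. apply in_map_iff in Hp. destruct Hp as [P [<- HP]].
    pose proof (HGH P HP) as HG. unfold H in HG.
    pose proof (upper_bound P w t2 f2 tb2 fb2 eps Hw' (Hn P HP) Ht2 Hf2). lra. }
  destruct (conv_lt w G _ ws Hl Hf Hlt) as [_ I2].
  rewrite Hs in I2. rewrite <- Hx in I2. specialize (I2 ltac:(lra)).
  pose proof (lower_bound S w t1 f1 a tb1 fb1 ab eps Hw' (Hn S HS) Ht1 Hf1 Ha).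
  unfold G in I2. fold x in H0. lra.
Qed.
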